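(* Let $H=\Bbbk^G\#\Bbbk F$ be as in the context with $G$ abelian, and assume the action of $F$ on $G$ is trivial: $g\triangleleft f=g$ for all $g\in G$, $f\in F$. Fix $f\in F$, let $V=\Bbbk v$ be a simple right $\Bbbk^{G_f}$-comodule with $\rho(v)=v\otimes\sum_{g\in G_f}a^gp_g$, and $\tilde V=(V\otimes\Bbbk f)\Box_{H'_f}H$ the induced right $H$-comodule. Let $V^*=\Bbbk v^*$ be the dual right $\Bbbk^{G_f}$-comodule, $\rho(v^* )=v^*\otimes\sum_{g\in G_f}a^gp_{g^{-1}}$. Then $G_{f^{-1}}=G_f$ and $\tilde V^*\cong(V^*\otimes\Bbbk f^{-1})\Box_{H'_{f^{-1}}}H$. Moreover, $\tilde V\cong\tilde V^*$ if and only if $V\cong V^*$ and $G_{f,f^{-1}}=\{g\in G\mid g\triangleright f=f^{-1}\}\neq\emptyset$.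
   Context: Setting: $\Bbbk$ algebraically closed of characteristic $0$, $F$ a group (possibly infinite), $G$ a finite abelian group, $(F,G,\triangleleft,\triangleright)$ a matched pair ($\triangleright:G\times F\to F$ a left action of $G$ on the set $F$, $\triangleleft:G\times F\to G$ a right action of $F$ on the set $G$, with $g\triangleright(ff')=(g\triangleright f)((g\triangleleft f)\triangleright f')$ and $(gg')\triangleleft f=(g\triangleleft(g'\triangleright f))(g'\triangleleft f)$). $H=\Bbbk^G\#\Bbbk F$ is the Hopf algebra with basis $\{p_g\#f\}$, product $(p_g\#f)(p_{g'}\#f')=\delta_{g\triangleleft f,g'}p_g\#ff'$, unit $\sum_gp_g\#1_F$, coproduct $\Delta(p_g\#f)=\sum_{x\in G}p_{gx^{-1}}\#(x\triangleright f)\otimes p_x\#f$, counit $\varepsilon(p_g\#f)=\delta_{g,1_G}$, antipode $S(p_g\#f)=p_{(g\triangleleft f)^{-1}}\#(g\triangleright f)^{-1}$. For $e\in F$: $G_e=\{g\in G\mid g\triangleright e=e\}$; $H'_e$ is the coalgebra with basis $\{p_g\#f'\mid g\in G_e,f'\in F\}$, $\Delta(p_g\#f')=\sum_{x\in G_e}p_{gx^{-1}}\#(x\triangleright f')\otimes p_x\#f'$, $\varepsilon(p_g\#f')=\delta_{g,1_G}$; $H$ is a left $H'_e$-comodule via $(\pi_e\otimes\mathrm{id})\Delta$ ($\pi_e$ kills $p_g\#f'$, $g\notin G_e$). For a right $\Bbbk^{G_e}$-comodule $U$ with $\rho(u)=\sum_{g\in G_e}u_g\otimes p_g$, $U\otimes\Bbbk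 e$ is a right $H'_e$-comodule via $u\otimes e\mapsto\sum_gu_g\otimes e\otimes p_g\#e$, and $(U\otimes\Bbbk e)\Box_{H'_e}H$ (cotensor product) is the induced right $H$-comodule with coaction $\mathrm{id}\otimes\Delta$. $\tilde V^*$ is the dual right $H$-comodule. *)

(* Defs.v *)
From HB Require Import structures.
From mathcomp Require Import all_boot all_order all_algebra all_fingroup.
From mathcomp Require Import boolp classical_sets functions.
From Stdlib Require Import ClassicalEpsilon.

Set Implicit Arguments.
Unset Strict Implicit.
Unset Printing Implicit Defensive.

Import GRing.Theory.
Local Open Scope ring_scope.

(* An element of W (x) C is represented by a finite formal sum               *)
(*    sum_i w_i (x) b_i     as a list  [:: (w_1, b_1); ... ; (w_n, b_n)].     *)
(* Two such lists denote the same tensor iff all their coefficients along    *)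
(* the basis B agree (teq).  A coalgebra is given by Delta and epsilon on    *)
(* its basis: Delta b = sum_j c_j b1_j (x) b2_j  (a list of (c_j,(b1_j,b2_j))).*)
(* A comodule lives on a subspace S of an ambient k-vector space W.          *)

Definition tcoef (k : fieldType) (W : lmodType k) (B : eqType)
  (t : seq (W * B)) (b : B) : W := \sum_(x <- t | x.2 == b) x.1.

Definition teq (k : fieldType) (W : lmodType k) (B : eqType)
  (t1 t2 : seq (W * B)) : Prop := forall b, tcoef t1 b = tcoef t2 b.

Definition tnorm (k : fieldType) (W : lmodType k) (B : eqType)
  (t : seq (W * B)) : seq (W * B) :=
  [seq (tcoef t b, b) | b <- undup (map snd t)].

(* (rho (x) id) : W (x) C' -> W (x) C (x) C' *)
Definition rho_id (k : fieldType) (W : lmodType k) (B B' : eqType)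
  (rho : W -> seq (W * B)) (t : seq (W * B')) : seq (W * (B * B')) :=
  flatten [seq [seq (y.1, (y.2, x.2)) | y <- tnorm (rho x.1)] | x <- tnorm t].

(* (id (x) delta) : W (x) C -> W (x) C1 (x) C2, delta given on the basis *)
Definition id_delta (k : fieldType) (W : lmodType k) (B B1 B2 : eqType)
  (delta : B -> seq (k * (B1 * B2))) (t : seq (W * B)) : seq (W * (B1 * B2)) :=
  flatten [seq [seq (c.1 *: x.1, c.2) | c <- delta x.2] | x <- t].

Definition subspace (k : fieldType) (W : lmodType k) (S : W -> Prop) : Prop :=
  S 0 /\ forall (a : k) u v, S u -> S v -> S (a *: u + v).

Definition is_rcomod (k : fieldType) (W : lmodType k) (B : eqType)
  (delta : B -> seq (k * (B * B))) (eps : B -> k)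
  (S : W -> Prop) (rho : W -> seq (W * B)) : Prop :=
  [/\ subspace S,
      (forall w b, S w -> S (tcoef (rho w) b)),
      (forall (a : k) u v, S u -> S v ->
          teq (rho (a *: u + v)) ([seq (a *: x.1, x.2) | x <- rho u] ++ rho v)),
      (forall w, S w -> teq (rho_id rho (rho w)) (id_delta delta (rho w))) &
      (forall w, S w -> \sum_(x <- rho w) eps x.2 *: x.1 = w)].

Definition rcomod_iso (k : fieldType) (W1 W2 : lmodType k) (B : eqType)
  (S1 : W1 -> Prop) (rho1 : W1 -> seq (W1 * B))
  (S2 : W2 -> Prop) (rho2 : W2 -> seq (W2 * B)) : Prop :=
  exists phi : W1 -> W2,
    [/\ (forall (a : k) u v, S1 u -> S1 v -> phi (a *: u + v) = a *: phi u + phi v),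
        (forall u, S1 u -> S2 (phi u)),
        (forall u v, S1 u -> S1 v -> phi u = phi v -> u = v),
        (forall w, S2 w -> exists2 u, S1 u & phi u = w) &
        (forall u, S1 u ->
            teq [seq (phi x.1, x.2) | x <- tnorm (rho1 u)] (rho2 (phi u)))].

(* The dual space S^* of a subspace S of W, realised canonically inside the *)
(* function space W -> k: linear forms on S, extended by 0 outside S.        *)
Definition dual_space (k : fieldType) (W : lmodType k) (S : W -> Prop)
  (phi : W -> k^o) : Prop :=
  (forall (a : k) u v, S u -> S v -> phi (a *: u + v) = a * phi u + phi v)
  /\ (forall w, ~ S w -> phi w = 0).

(* rhod is the coaction of the dual right comodule of (S, rho), for the      *)
(* antipode antip (given on the basis): phi_(0)(w) phi_(1) = phi(w_(0)) S(w_(1)) *)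
Definition is_dual_coact (k : fieldType) (W : lmodType k) (B : eqType)
  (antip : B -> seq (k * B)) (S : W -> Prop) (rho : W -> seq (W * B))
  (rhod : (W -> k^o) -> seq ((W -> k^o) * B)) : Prop :=
  forall phi, dual_space S phi ->
    (forall b, dual_space S (tcoef (rhod phi) b)) /\
    (forall w, S w ->
       teq [seq ((x.1 w : k^o), x.2) | x <- rhod phi]
           (flatten [seq [seq ((c.1 * phi x.1 : k^o), c.2) | c <- antip x.2]
                    | x <- tnorm (rho w)])).

(* tr g f  stands for  g |> f   and   tl g f  stands for  g <| f.            *)
(* The basis element p_g # f of H is the pair (g, f) : G * F.                *)

Definition matched_pair (F : groupType) (G : finGroupType)
  (tr : G -> F -> F) (tl : G -> F -> G) : Prop :=
  [/\
      (forall f, tr 1%g f = f),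
      (forall g g' f, tr (g * g')%g f = tr g (tr g' f)),
      (forall g, tl g 1%g = g) &
      (forall g f f', tl g (f * f')%g = tl (tl g f) f')]
  /\
  (forall g f f', tr g (f * f')%g = (tr g f * tr (tl g f) f')%g)
  /\ (forall g g' f, tl (g * g')%g f = (tl g (tr g' f) * tl g' f)%g).

Definition stab (F : groupType) (G : finGroupType) (tr : G -> F -> F) (e : F)
  : {set G} := [set g | tr g e == e].

Definition deltaH (k : fieldType) (F : groupType) (G : finGroupType)
  (tr : G -> F -> F) (b : G * F) : seq (k * ((G * F) * (G * F))) :=
  [seq (1, ((b.1 * x^-1, tr x b.2)%g, (x, b.2))) | x <- enum G].

Definition epsH (k : fieldType) (F : groupType) (G : finGroupType)
  (b : G * F) : k := (b.1 == 1%g)%:R.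

Definition antipH (k : fieldType) (F : groupType) (G : finGroupType)
  (tr : G -> F -> F) (tl : G -> F -> G) (b : G * F) : seq (k * (G * F)) :=
  [:: (1, ((tl b.1 b.2)^-1, (tr b.1 b.2)^-1)%g)].

(* the left H'_e-coaction (pi_e (x) id) Delta on H, on the basis *)
Definition lambdaH (k : fieldType) (F : groupType) (G : finGroupType)
  (tr : G -> F -> F) (e : F) (b : G * F) : seq (k * ((G * F) * (G * F))) :=
  [seq c <- deltaH k tr b | c.2.1.1 \in stab tr e].

Definition deltaK (k : fieldType) (F : groupType) (G : finGroupType)
  (tr : G -> F -> F) (e : F) (g : G) : seq (k * (G * G)) :=
  [seq (1, ((g * x^-1)%g, x)) | x <- enum (stab tr e)].

Definition epsK (k : fieldType) (G : finGroupType) (g : G) : k :=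
  (g == 1%g)%:R.

(* U (x) k e as a right H'_e-comodule: u(x)e |-> sum_g u_g (x) e (x) p_g#e.  *)
(* (U (x) ke is identified with U, the factor ke being one-dimensional.)     *)
Definition rho_tens_e (k : fieldType) (F : groupType) (G : finGroupType)
  (U : lmodType k) (rhoU : U -> seq (U * G)) (e : F) (u : U)
  : seq (U * (G * F)) :=
  [seq (y.1, (y.2, e)) | y <- tnorm (rhoU u)].

(* Elements of (U (x) ke) (x) H = U (x) H: finitely supported functions G*F -> U *)
Definition fin_supp (k : fieldType) (U : lmodType k) (X : eqType)
  (t : X -> U) : Prop := exists s : seq X, forall x, t x != 0 -> x \in s.

Definition fsupp (k : fieldType) (U : lmodType k) (X : eqType)
  (t : X -> U) : seq X :=
  epsilon (inhabits [::]) (fun s => uniq s /\ forall x, t x != 0 -> x \in s).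

Definition frep (k : fieldType) (U : lmodType k) (X : eqType)
  (t : X -> U) : seq (U * X) := [seq (t x, x) | x <- fsupp t].

Definition cotensor_space (k : fieldType) (F : groupType) (G : finGroupType)
  (tr : G -> F -> F) (U : lmodType k) (rhoU : U -> seq (U * G)) (e : F)
  (t : (G * F) -> U) : Prop :=
  fin_supp t /\
  teq (rho_id (rho_tens_e rhoU e) (frep t)) (id_delta (lambdaH k tr e) (frep t)).

Definition dfun (k : fieldType) (U : lmodType k) (X : eqType) (b : X) (u : U)
  : X -> U := fun b' => if b' == b then u else 0.

Definition ind_coact (k : fieldType) (F : groupType) (G : finGroupType)
  (tr : G -> F -> F) (U : lmodType k) (t : (G * F) -> U)
  : seq (((G * F) -> U) * (G * F)) :=
  flatten [seq [seq (dfun c.2.1 (c.1 *: x.1), c.2.2) | c <- deltaH k tr x.2]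
          | x <- frep t].

(* V = k v with rho(v) = v (x) sum_(g in G_f) a^g p_g  (V identified with k, v = 1) *)
Definition rhoV (k : fieldType) (F : groupType) (G : finGroupType)
  (tr : G -> F -> F) (f : F) (a : G -> k) (c : k^o) : seq (k^o * G) :=
  [seq ((c * a g : k^o), g) | g <- enum (stab tr f)].

Definition rhoVd (k : fieldType) (F : groupType) (G : finGroupType)
  (tr : G -> F -> F) (f : F) (a : G -> k) (c : k^o) : seq (k^o * G) :=
  [seq ((c * a g : k^o), (g^-1)%g) | g <- enum (stab tr f)].

(* Main.v *)
Require Import Defs.
From HB Require Import structures.
From mathcomp Require Import all_boot all_order all_algebra all_fingroup.
From mathcomp Require Import boolp classical_sets functions.
From Stdlib Require Import ClassicalEpsilon.
From mathcomp Require Import ring.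

Set Implicit Arguments.
Unset Strict Implicit.
Unset Printing Implicit Defensive.
Import GRing.Theory.
Local Open Scope ring_scope.
Section Generic.
Variables (k : fieldType) (W : lmodType k) (B : eqType).

Lemma sum_pred1_uniq (T : eqType) (V : nmodType) (r : seq T) (j : T) (F : T -> V) :
  uniq r -> \sum_(i <- r | i == j) F i = if j \in r then F j else 0.
Proof.
elim: r => [|x r IH] /=; first by rewrite big_nil.
case/andP => xr ur; rewrite big_cons IH // in_cons.
by case: (eqVneq x j) => [<-|nx] /=; rewrite ?(negPf xr) ?addr0.
Qed.

Lemma sum_if_uniq (T : eqType) (V : nmodType) (r : seq T) (j : T) (c : V) :
  uniq r -> \sum_(i <- r) (if i == j then c else 0) = if j \in r then c else 0.
Proof.
elim: r => [|x r IH] /=; first by rewrite big_nil.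
case/andP => xr ur; rewrite big_cons IH // in_cons.
by case: (eqVneq x j) => [<-|nx] /=; rewrite ?(negPf xr) ?addr0 ?add0r.
Qed.

Lemma tcoef_cat (s1 s2 : seq (W * B)) b :
  tcoef (s1 ++ s2) b = tcoef s1 b + tcoef s2 b.
Proof. by rewrite /tcoef big_cat. Qed.

Lemma tcoef_flatten (L : seq (seq (W * B))) b :
  tcoef (flatten L) b = \sum_(l <- L) tcoef l b.
Proof. by rewrite /tcoef big_flatten. Qed.

Lemma tcoef_map (T : Type) (s : seq T) (h : T -> W * B) b :
  tcoef (map h s) b = \sum_(x <- s | (h x).2 == b) (h x).1.
Proof. by rewrite /tcoef big_map. Qed.

Lemma tcoef_notin (t : seq (W * B)) b : b \notin map snd t -> tcoef t b = 0.
Proof.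
move=> nb; rewrite /tcoef big_seq_cond big1 // => x /andP [xt /eqP xb].
by case/negP: nb; rewrite -xb; apply: map_f.
Qed.

Lemma tcoef_tnorm (t : seq (W * B)) b : tcoef (tnorm t) b = tcoef t b.
Proof.
rewrite /tnorm tcoef_map /= sum_pred1_uniq ?undup_uniq //.
by rewrite mem_undup; case: ifP => // /negbT /tcoef_notin ->.
Qed.

End Generic.
Section Generic2.
Variables (k : fieldType) (W : lmodType k) (B : eqType).

Lemma tcoef_tnorm_map (W' : lmodType k) (phi : W -> W') (t : seq (W * B)) b :
  phi 0 = 0 -> tcoef [seq (phi x.1, x.2) | x <- tnorm t] b = phi (tcoef t b).
Proof.
move=> phi0; rewrite /tnorm -map_comp tcoef_map /=.
rewrite sum_pred1_uniq ?undup_uniq //.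
by rewrite mem_undup; case: ifP => // /negbT /tcoef_notin ->.
Qed.



Lemma teq_tcoef (t1 t2 : seq (W * B)) : teq t1 t2 <-> forall b, tcoef t1 b = tcoef t2 b.
Proof. by []. Qed.

Lemma tcoef_pair (B0 B' : eqType) (s : seq (W * B0)) (c : B') g (b : B') :
  tcoef [seq (y.1, (y.2, c)) | y <- s] (g, b) = if c == b then tcoef s g else 0.
Proof.
rewrite tcoef_map /=; case: (eqVneq c b) => [->|nc].
  by apply: eq_bigl => y; rewrite xpair_eqE eqxx andbT.
by rewrite big1 // => y; rewrite xpair_eqE (negPf nc) andbF.
Qed.

Lemma tcoef_rho_id (B1 : eqType) (rho : W -> seq (W * B1)) (t : seq (W * B)) g b :
  (forall g, tcoef (rho 0) g = 0) ->
  tcoef (rho_id rho t) (g, b) = tcoef (rho (tcoef t b)) g.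
Proof.
move=> rho0; rewrite /rho_id tcoef_flatten big_map.
rewrite [tnorm t]/tnorm big_map.
under eq_bigr => b' _ do rewrite /= tcoef_pair tcoef_tnorm.
rewrite -big_mkcond /= sum_pred1_uniq ?undup_uniq //.
by rewrite mem_undup; case: ifP => // /negbT /tcoef_notin ->.
Qed.

Lemma tcoef_id_delta (B1 B2 : eqType) (delta : B -> seq (k * (B1 * B2))) (t : seq (W * B)) c :
  tcoef (id_delta delta t) c = \sum_(x <- t) \sum_(d <- delta x.2 | d.2 == c) d.1 *: x.1.
Proof. by rewrite /id_delta tcoef_flatten big_map; apply: eq_bigr => x _; rewrite tcoef_map. Qed.

End Generic2.
Section Supp.
Variables (k : fieldType) (U : lmodType k) (X : eqType).

Lemma fsupp_spec (t : X -> U) :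
  fin_supp t -> uniq (fsupp t) /\ forall x, t x != 0 -> x \in fsupp t.
Proof.
move=> [s hs]; rewrite /fsupp.
apply: (@epsilon_spec _ (inhabits [::]) (fun s => uniq s /\ forall x, t x != 0 -> x \in s)).
exists (undup s); split; first exact: undup_uniq.
by move=> x /hs; rewrite mem_undup.
Qed.

Lemma fsupp_eq (t : X -> U) x : fin_supp t -> x \notin fsupp t -> t x = 0.
Proof.
move=> /fsupp_spec [_ h] nx; case: (eqVneq (t x) 0) => // /h.
by rewrite (negPf nx).
Qed.

Lemma tcoef_frep (t : X -> U) b : fin_supp t -> tcoef (frep t) b = t b.
Proof.
move=> ft; have [u _] := fsupp_spec ft.
rewrite /frep tcoef_map /= sum_pred1_uniq //.
by case: ifP => // /negbT nb; rewrite fsupp_eq.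
Qed.

End Supp.

Section Ind.
Variables (k : fieldType) (F : groupType) (G : finGroupType) (tr : G -> F -> F).

Definition Cind (t : G * F -> k^o) (b : G * F) : G * F -> k^o :=
  fun p => if p.2 == tr b.1 b.2 then t (p.1 * b.1, b.2)%g else 0.

Lemma tcoef_ind (t : G * F -> k^o) b :
  fin_supp t -> tcoef (ind_coact tr t) b = Cind t b.
Proof.
move=> ft; have [u _] := fsupp_spec ft.
rewrite /ind_coact tcoef_flatten big_map /frep big_map.
apply/funext => -[p1 p2]; rewrite fct_sumE.
case: b => b1 b2.
transitivity (\sum_(x <- fsupp t)
   (if x == ((p1 * b1)%g, b2) then Cind t (b1, b2) (p1, p2) else 0)).
  apply: eq_bigr => -[x1 x2] _.
  rewrite /deltaH -map_comp tcoef_map /= fct_sumE.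
  case: (eqVneq x2 b2) => [->|nx]; last first.
    rewrite big1; last by move=> z; rewrite xpair_eqE (negPf nx) andbF.
    by rewrite xpair_eqE (negPf nx) andbF.
  under eq_bigl => z do rewrite xpair_eqE eqxx andbT.
  rewrite sum_pred1_uniq ?enum_uniq // mem_enum inE /dfun scale1r /Cind /=.
  rewrite !xpair_eqE.
  rewrite eqxx andbT; case: (p2 == tr b1 b2); rewrite ?andbF ?andbT ?if_same //.
  case: (eqVneq x1 (p1 * b1)%g) => [->|nx1].
    by rewrite mulgK eqxx.
  case: (eqVneq p1 (x1 * b1^-1)%g) => // ep; case/negP: nx1.
  by rewrite ep mulgVK.
rewrite sum_if_uniq //; case: ifP => // /negbT nq.
rewrite /Cind /=; case: ifP => // _; by rewrite fsupp_eq.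
Qed.

End Ind.
Section IndChar.
Variables (k : fieldType) (F : groupType) (G : finGroupType) (tr : G -> F -> F).
Hypothesis tr1 : forall f, tr 1%g f = f.
Hypothesis trM : forall g g' f, tr (g * g')%g f = tr g (tr g' f).

Definition IndS (e : F) (beta : G -> k) (t : G * F -> k^o) : Prop :=
  (forall x f2, tr x f2 != e -> t (x, f2) = 0) /\
  (forall g x f2, g \in stab tr e -> tr x f2 = e -> t ((g * x)%g, f2) = beta g * t (x, f2)).

Lemma trK g f : tr g^-1 (tr g f) = f.
Proof. by rewrite -trM mulVg tr1. Qed.

Lemma trKV g f : tr g (tr g^-1 f) = f.
Proof. by rewrite -trM mulgV tr1. Qed.

Lemma tr_inj g : injective (tr g).
Proof. exact: (can_inj (@trK g)). Qed.

Lemma stab1 (e : F) : 1%g \in stab tr e.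
Proof. by rewrite inE tr1. Qed.

Lemma IndS_fin (e : F) beta t : IndS e beta t -> fin_supp t.
Proof.
move=> [h _]; exists [seq (x, tr x^-1 e) | x <- enum G] => -[x f2] nz.
case: (eqVneq (tr x f2) e) => [<-|ne]; last by rewrite h ?eqxx in nz.
by apply/mapP; exists x; rewrite ?mem_enum // trK.
Qed.

Lemma tcoef_rho_tens (rhoU : k^o -> seq (k^o * G)) (e : F) u g f1 :
  tcoef (rho_tens_e rhoU e u) (g, f1) = if e == f1 then tcoef (rhoU u) g else 0.
Proof. by rewrite /rho_tens_e tcoef_pair tcoef_tnorm. Qed.

Lemma tcoef_lambda_frep (e : F) (t : G * F -> k^o) g f1 x f2 : fin_supp t ->
  tcoef (id_delta (lambdaH k tr e) (frep t)) ((g, f1), (x, f2)) =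
  if (g \in stab tr e) && (f1 == tr x f2) then t ((g * x)%g, f2) else 0.
Proof.
move=> ft; have [u _] := fsupp_spec ft.
rewrite tcoef_id_delta /frep big_map.
transitivity (\sum_(y <- fsupp t) (if y == ((g * x)%g, f2) then
     (if (g \in stab tr e) && (f1 == tr x f2) then t ((g * x)%g, f2) else 0) else 0)).
  apply: eq_bigr => -[y1 y2] _ /=.
  rewrite /lambdaH big_filter_cond /deltaH big_map /=.
  rewrite (eq_bigl (fun z => (z == x) && [&& (y1 * x^-1)%g \in stab tr e,
      (y1 * x^-1 == g)%g, tr x y2 == f1 & y2 == f2])); last first.
    move=> z /=; rewrite !xpair_eqE.
    case: (eqVneq z x) => [->|nz]; first by rewrite /= !andbA.
    by rewrite /= !andbF.
  rewrite big_mkcondr sum_pred1_uniq ?enum_uniq // mem_enum scale1r.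
  rewrite xpair_eqE.
  case: (eqVneq y2 f2) => [->|ny]; last by rewrite !andbF ?if_same.
  rewrite !andbT.
  case: (eqVneq y1 (g * x)%g) => [->|ny1].
    rewrite mulgK eqxx /=; case: (g \in stab tr e) => //=.
    by rewrite eq_sym.
  case: (eqVneq (y1 * x^-1)%g g) => [eg|]; last by rewrite !andbF ?if_same.
  by case/negP: ny1; rewrite -eg mulgVK.
rewrite sum_if_uniq //; case: ifP => // /negbT nq.
by case: ifP => // _; rewrite fsupp_eq.
Qed.

Lemma cotensor_IndS (rhoU : k^o -> seq (k^o * G)) (e : F) beta t :
  (forall c g, tcoef (rhoU c) g = if g \in stab tr e then c * beta g else 0) ->
  beta 1%g = 1 ->
  cotensor_space tr rhoU e t <-> IndS e beta t.
Proof.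
move=> hrho b1; split.
  move=> [ft E].
  have E' : forall g f1 x f2,
    (if e == f1 then (if g \in stab tr e then t (x, f2) * beta g else 0) else 0)
    = if (g \in stab tr e) && (f1 == tr x f2) then t ((g * x)%g, f2) else 0.
    move=> g f1 x f2; have := E ((g, f1), (x, f2)).
    rewrite tcoef_rho_id; last by move=> [g' f']; rewrite tcoef_rho_tens hrho mul0r !if_same.
    by rewrite tcoef_rho_tens tcoef_frep // hrho tcoef_lambda_frep.
  split.
    move=> x f2 ne; have := E' 1%g e x f2.
    by rewrite eqxx stab1 b1 mulr1 /= eq_sym (negPf ne).
  move=> g x f2 gs ex; have := E' g e x f2.
  by rewrite eqxx gs ex eqxx /= mulrC => ->.
move=> [h1 h2]; have ft := IndS_fin (conj h1 h2); split => // -[[g f1] [x f2]].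
rewrite tcoef_rho_id; last by move=> [g' f']; rewrite tcoef_rho_tens hrho mul0r !if_same.
rewrite tcoef_rho_tens tcoef_frep // hrho tcoef_lambda_frep //.
case gs: (g \in stab tr e); last by rewrite if_same.
rewrite /=.
case: (eqVneq (tr x f2) e) => [ex|ne].
  rewrite ex eq_sym; case: (eqVneq f1 e) => // _.
  by rewrite h2 // mulrC.
rewrite h1 // mul0r if_same.
have -> : t ((g * x)%g, f2) = 0.
  apply: h1; rewrite trM; apply: contra ne => /eqP eq.
  move: gs; rewrite inE => /eqP gs; apply/eqP.
  by apply: (@tr_inj g); rewrite eq gs.
by rewrite if_same.
Qed.

End IndChar.
Section Iso.
Variables (k : fieldType).

Definition lin_on (W1 W2 : lmodType k) (S1 : W1 -> Prop) (phi : W1 -> W2) :=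
  forall (a : k) u v, S1 u -> S1 v -> phi (a *: u + v) = a *: phi u + phi v.

Lemma lin0 (W1 W2 : lmodType k) (S1 : W1 -> Prop) (phi : W1 -> W2) :
  lin_on S1 phi -> S1 0 -> phi 0 = 0.
Proof.
move=> l s0; have := l 1 0 0 s0 s0; rewrite scale1r addr0 scale1r => h.
by apply: (@addrI _ (phi 0)); rewrite -h addr0.
Qed.

Definition iso' (W1 W2 : lmodType k) (B : Type) (S1 : W1 -> Prop) (C1 : W1 -> B -> W1)
  (S2 : W2 -> Prop) (C2 : W2 -> B -> W2) : Prop :=
  exists phi : W1 -> W2,
    [/\ lin_on S1 phi, (forall u, S1 u -> S2 (phi u)),
        (forall u v, S1 u -> S1 v -> phi u = phi v -> u = v),
        (forall w, S2 w -> exists2 u, S1 u & phi u = w) &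
        (forall u b, S1 u -> C2 (phi u) b = phi (C1 u b))].

Lemma rcomod_iso_iso' (W1 W2 : lmodType k) (B : eqType) (S1 : W1 -> Prop)
  (rho1 : W1 -> seq (W1 * B)) (S2 : W2 -> Prop) (rho2 : W2 -> seq (W2 * B)) :
  S1 0 ->
  rcomod_iso S1 rho1 S2 rho2 <->
  iso' S1 (fun u b => tcoef (rho1 u) b) S2 (fun u b => tcoef (rho2 u) b).
Proof.
move=> s0; split.
  move=> [phi [l m i s c]]; exists phi; split => // u b Su.
  by have := c u Su b; rewrite tcoef_tnorm_map ?(lin0 l s0).
move=> [phi [l m i s c]]; exists phi; split => // u Su b.
by rewrite tcoef_tnorm_map ?(lin0 l s0) // c.
Qed.

Lemma iso'_ext (W1 W2 : lmodType k) (B : Type) (S1 : W1 -> Prop) C1 C1'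
  (S2 : W2 -> Prop) C2 C2' :
  (forall u (b : B), S1 u -> C1 u b = C1' u b) ->
  (forall u (b : B), S2 u -> C2 u b = C2' u b) ->
  iso' S1 C1 S2 C2 -> iso' S1 C1' S2 C2'.
Proof.
move=> e1 e2 [phi [l m i s c]]; exists phi; split => // u b Su.
by rewrite -e1 // -e2 ?c //; apply: m.
Qed.

Lemma iso'_comp (W1 W2 W3 : lmodType k) (B : Type) (S1 : W1 -> Prop) C1
  (S2 : W2 -> Prop) C2 (S3 : W3 -> Prop) (C3 : W3 -> B -> W3) :
  iso' S1 C1 S2 C2 -> iso' S2 C2 S3 C3 -> iso' S1 C1 S3 C3.
Proof.
move=> [phi [l m i s c]] [psi [l' m' i' s' c']]; exists (psi \o phi); split.
- by move=> a u v Su Sv /=; rewrite l // l' //; apply: m.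
- by move=> u Su; apply: m'; apply: m.
- by move=> u v Su Sv /= /i'; move=> h; apply: i => //; apply: h; apply: m.
- move=> w /s' [v Sv <-]; have [u Su <-] := s v Sv; by exists u.
- by move=> u b Su /=; rewrite c' ?c //; apply: m.
Qed.

Lemma iso'_sym (W1 W2 : lmodType k) (B : Type) (S1 : W1 -> Prop) C1
  (S2 : W2 -> Prop) (C2 : W2 -> B -> W2) :
  subspace S1 -> subspace S2 ->
  (forall u b, S1 u -> S1 (C1 u b)) -> (forall w b, S2 w -> S2 (C2 w b)) ->
  iso' S1 C1 S2 C2 -> iso' S2 C2 S1 C1.
Proof.
move=> [s10 s1l] [s20 s2l] cl1 cl2 [phi [l m i s c]].
pose psi w := epsilon (inhabits 0) (fun u => S1 u /\ phi u = w).
have psiP w : S2 w -> S1 (psi w) /\ phi (psi w) = w.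
  move=> Sw; apply: (@epsilon_spec _ (inhabits 0) (fun u => S1 u /\ phi u = w)).
  by have [u Su e] := s w Sw; exists u.
exists psi; split.
- move=> a w w' Sw Sw'; have [p1 e1] := psiP _ Sw; have [p2 e2] := psiP _ Sw'.
  have [p3 e3] := psiP _ (s2l a _ _ Sw Sw').
  by apply: i => //; [apply: s1l | rewrite l // e1 e2 e3].
- by move=> w /psiP [].
- move=> w w' Sw Sw' e; have [_ e1] := psiP _ Sw; have [_ e2] := psiP _ Sw'.
  by rewrite -e1 -e2 e.
- by move=> u Su; exists (phi u); [apply: m | apply: i; [case: (psiP _ (m _ Su))|..|case: (psiP _ (m _ Su))]].
- move=> w b Sw; have [p1 e1] := psiP _ Sw; have [p2 e2] := psiP _ (cl2 w b Sw).
  apply: i => //; first exact: cl1.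
  by rewrite -c // e1 e2.
Qed.

End Iso.
Section Main.
Variables (k : fieldType) (F : groupType) (G : finGroupType) (tr : G -> F -> F)
  (f : F) (a : G -> k).
Hypothesis tr1 : forall f, tr 1%g f = f.
Hypothesis trM : forall g g' f, tr (g * g')%g f = tr g (tr g' f).
Hypothesis trmul : forall g f f', tr g (f * f')%g = (tr g f * tr g f')%g.
Hypothesis abel : forall x y : G, (x * y = y * x)%g.
Hypothesis a1 : a 1%g = 1.
Hypothesis aM : forall g h, g \in stab tr f -> h \in stab tr f -> a (g * h)%g = a g * a h.

Local Notation S := (stab tr f).

Lemma stabP e g : reflect (tr g e = e) (g \in stab tr e).
Proof. by rewrite inE; apply: eqP. Qed.

Lemma stabM e g h : g \in stab tr e -> h \in stab tr e -> (g * h)%g \in stab tr e.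
Proof. by move=> /stabP gs /stabP hs; apply/stabP; rewrite trM hs gs. Qed.

Lemma stabV e g : g \in stab tr e -> g^-1%g \in stab tr e.
Proof. by move=> /stabP gs; apply/stabP; rewrite -{1}gs trK. Qed.

Lemma stabVE e g : (g^-1%g \in stab tr e) = (g \in stab tr e).
Proof. by apply/idP/idP => /stabV //; rewrite invgK. Qed.

Lemma stabML e g h : g \in stab tr e -> ((g * h)%g \in stab tr e) = (h \in stab tr e).
Proof.
move=> gs; apply/idP/idP; last exact: stabM.
by move=> ghs; rewrite -(mulKg g h); apply: stabM => //; apply: stabV.
Qed.

Lemma tr_one g : tr g 1%g = 1%g.
Proof.
have h : (tr g 1 * tr g 1)%g = (tr g 1 * 1)%g by rewrite -trmul !mulg1.
exact: (mulgI _ _ _ h).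
Qed.

Lemma trV g e : tr g e^-1%g = (tr g e)^-1%g.
Proof.
apply/esym/mulg1_eq; by rewrite -trmul mulgV tr_one.
Qed.

Lemma stab_inv : stab tr f^-1%g = S.
Proof. by apply/setP => g; rewrite !inE trV eqg_inv. Qed.

Lemma aV h : h \in S -> a h^-1%g * a h = 1.
Proof. by move=> hs; rewrite -aM ?mulVg // stabV. Qed.

Lemma tcoef_rhoV c g : tcoef (rhoV tr f a c) g = if g \in S then c * a g else 0.
Proof.
rewrite /rhoV tcoef_map /= (@sum_pred1_uniq _ _ _ _ (fun h => (c * a h : k^o))) ?enum_uniq //.
by rewrite mem_enum.
Qed.

Lemma tcoef_rhoVd c g :
  tcoef (rhoVd tr f a c) g = if g \in stab tr f^-1%g then c * a g^-1%g else 0.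
Proof.
rewrite /rhoVd tcoef_map /=.
rewrite (eq_bigl (fun h => h == g^-1%g)); last by move=> h; rewrite eqg_invLR.
rewrite (@sum_pred1_uniq _ _ _ _ (fun h => (c * a h : k^o))) ?enum_uniq //.
by rewrite mem_enum stab_inv stabVE.
Qed.


Local Notation Sf := (IndS tr f a).

Lemma fadd (X : Type) (c : k) (u v : X -> k^o) p : (c *: u + v) p = c * u p + v p.
Proof. by []. Qed.

Lemma fscale (X : Type) (c : k) (u : X -> k^o) p : (c *: u) p = c * u p.
Proof. by []. Qed.

Lemma IndS_sub (e : F) (beta : G -> k) : subspace (IndS tr e beta).
Proof.
split; first by split => * //=; rewrite mulr0.
move=> c u v [h1 h2] [h1' h2']; split.
  by move=> x f2 ne; rewrite fadd h1 ?h1' // mulr0 addr0.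
by move=> g x f2 gs ex; rewrite !fadd h2 ?h2' // mulrDr mulrCA.
Qed.

Lemma Cind_in (e : F) (beta : G -> k) t b : IndS tr e beta t -> IndS tr e beta (Cind tr t b).
Proof.
case: b => y f2 [h1 h2]; split.
  move=> x f3 ne; rewrite /Cind /=; case: eqP => // ef.
  by apply: h1; rewrite trM -ef.
move=> g x f3 gs ex; rewrite /Cind /=; case: eqP => [ef|_]; last by rewrite mulr0.
by rewrite -mulgA h2 // trM -ef.
Qed.

Definition E x : G * F -> k^o := fun p =>
  if (p.2 == tr x^-1%g f) && ((p.1 * x^-1)%g \in S) then a (p.1 * x^-1)%g else 0.

Lemma E_in x : Sf (E x).
Proof.
split.
  move=> z f2 ne; rewrite /E /=; case: ifP => // /andP [/eqP e2 /stabP zs].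
  by case/negP: ne; rewrite e2 -trM zs.
move=> g z f2 gs ezf; rewrite /E /= -mulgA stabML //.
case: ifP => [/andP [_ zs]|_]; [exact: aM | by rewrite mulr0].
Qed.

Lemma E_shift h x : h \in S -> E (h * x)%g = a h^-1%g *: E x.
Proof.
move=> hs; apply/funext => -[p1 p2].
have eq1 : tr (h * x)^-1%g f = tr x^-1%g f.
  by rewrite invMg trM; move/stabV/stabP: hs => ->.
have eq2 : (p1 * (h * x)^-1 = h^-1 * (p1 * x^-1))%g by rewrite invMg mulgA abel.
rewrite fscale /E /= eq1 eq2 stabML ?stabV //.
case: ifP => /= [/andP [_ qs] | _]; [rewrite aM ?stabV // | by rewrite mulr0].
Qed.

Hypothesis ch0 : [pchar k] =i pred0.

Lemma cardS_neq0 : (#|S|%:R : k) != 0.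
Proof.
move/pcharf0P: ch0 => ->; rewrite -lt0n card_gt0; apply/set0Pn.
by exists 1%g; apply: stab1.
Qed.

Lemma sum_stab (z : G) (c : k) :
  \sum_(x : G) (if (z * x^-1)%g \in S then c else 0) = #|S|%:R * c.
Proof.
have hinj : injective (fun h : G => (h^-1 * z)%g) by move=> u v /mulIg /invg_inj.
rewrite (reindex_inj hinj) /=.
under eq_bigr => h _ do rewrite invMg invgK mulVKg.
by rewrite -big_mkcond /= sumr_const mulr_natl.
Qed.


Lemma trK' g e : tr g^-1%g (tr g e) = e.
Proof. by rewrite -trM mulVg tr1. Qed.

Lemma trKV' g e : tr g (tr g^-1%g e) = e.
Proof. by rewrite -trM mulgV tr1. Qed.

Lemma Edecomp t : Sf t ->
  t = (#|S|%:R)^-1 *: \sum_(x : G) t (x, tr x^-1%g f) *: E x.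
Proof.
move=> [h1 h2]; apply/funext => -[z f3].
rewrite fscale fct_sumE /=.
under eq_bigr => x _ do rewrite fscale.
rewrite (eq_bigr (fun x => if (z * x^-1)%g \in S then t (z, f3) else 0)).
  by rewrite sum_stab mulKf ?cardS_neq0.
move=> x _; rewrite /E /=.
case zs: ((z * x^-1)%g \in S); last by rewrite andbF mulr0.
rewrite andbT.
have ex : tr z^-1%g f = tr x^-1%g f.
  have -> : z^-1%g = (x^-1 * (z * x^-1)^-1)%g by rewrite invMg invgK mulKg.
  by rewrite trM; move/stabV/stabP: zs => ->.
case: (eqVneq f3 (tr x^-1%g f)) => [ef|ne].
  rewrite ef.
  have := h2 _ x (tr x^-1%g f) zs (trKV' _ _); rewrite mulgVK => ->.
  by rewrite mulrC.
rewrite mulr0 h1 //; apply/eqP => ezf; case/negP: ne.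
by rewrite -ex -ezf trK'.
Qed.

Lemma lin_sum (W : lmodType k) (S0 : W -> Prop) (phi : W -> k^o) (I : Type)
  (r : seq I) (c : I -> k) (u : I -> W) :
  subspace S0 ->
  (forall (a : k) u v, S0 u -> S0 v -> phi (a *: u + v) = a * phi u + phi v) ->
  (forall i, S0 (u i)) ->
  S0 (\sum_(i <- r) c i *: u i) /\ phi (\sum_(i <- r) c i *: u i) = \sum_(i <- r) c i * phi (u i).
Proof.
move=> [s0 sl] l su; have phi0 : phi 0 = 0.
  have := l 1 0 0 s0 s0; rewrite scale1r addr0 mul1r => h.
  by apply: (@addrI _ (phi 0)); rewrite -h addr0.
elim: r => [|x r [IH1 IH2]]; first by rewrite !big_nil.
by rewrite !big_cons; split; [exact: sl | rewrite l // IH2].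
Qed.

Lemma lin_phi0 (W : lmodType k) (S0 : W -> Prop) (phi : W -> k^o) :
  subspace S0 ->
  (forall (a : k) u v, S0 u -> S0 v -> phi (a *: u + v) = a * phi u + phi v) ->
  phi 0 = 0.
Proof.
move=> [s0 sl] l; have := l 1 0 0 s0 s0; rewrite scale1r addr0 mul1r => h.
by apply: (@addrI _ (phi 0)); rewrite -h addr0.
Qed.

Lemma lin_scale (W : lmodType k) (S0 : W -> Prop) (phi : W -> k^o) c w :
  subspace S0 ->
  (forall (a : k) u v, S0 u -> S0 v -> phi (a *: u + v) = a * phi u + phi v) ->
  S0 w -> phi (c *: w) = c * phi w.
Proof.
move=> sS l Sw; have [s0 _] := sS.
by have := l c w 0 Sw s0; rewrite !addr0 (lin_phi0 sS l) addr0.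
Qed.

Lemma dual_eval phi w : dual_space Sf phi -> Sf w ->
  phi w = (#|S|%:R)^-1 * \sum_(x : G) w (x, tr x^-1%g f) * phi (E x).
Proof.
move=> [l z] Sw; rewrite {1}(Edecomp Sw).
have sS := IndS_sub f a.
have [Ss e1] := lin_sum (index_enum G) (fun x => w (x, tr x^-1%g f)) sS l E_in.
by rewrite (lin_scale _ sS l Ss) e1.
Qed.

Lemma dual_ext phi phi' : dual_space Sf phi -> dual_space Sf phi' ->
  (forall x, phi (E x) = phi' (E x)) -> phi = phi'.
Proof.
move=> dp dp' he; apply/funext => w.
case: (pselect (Sf w)) => Sw; last by rewrite dp.2 // dp'.2.
rewrite (dual_eval dp Sw) (dual_eval dp' Sw); congr (_ * _).
by apply: eq_bigr => x _; rewrite he.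
Qed.


Lemma tcoef1 (W : lmodType k) (B : eqType) (v : W) (b b' : B) :
  tcoef [:: (v, b)] b' = if b == b' then v else 0.
Proof. by rewrite /tcoef big_cons big_nil /=; case: ifP; rewrite ?addr0. Qed.

Local Notation S' := (IndS tr f^-1%g (fun g => a g^-1%g)).

Variables (tl : G -> F -> G)
  (rhod : (((G * F) -> k^o) -> k^o) -> seq ((((G * F) -> k^o) -> k^o) * (G * F))).
Hypothesis tltriv : forall g h, tl g h = g.
Hypothesis hd : is_dual_coact (antipH k tr tl) Sf (@ind_coact k F G tr k^o) rhod.

Lemma dual_coef phi y f2 w : dual_space Sf phi -> Sf w ->
  tcoef (rhod phi) (y, f2) w = phi (Cind tr w (y^-1%g, tr y f2^-1%g)).
Proof.
move=> dp Sw; have [_ h] := hd dp; have := h w Sw (y, f2).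
have -> : tcoef [seq ((x.1 w : k^o), x.2) | x <- rhod phi] (y, f2) = tcoef (rhod phi) (y, f2) w.
  by rewrite tcoef_map /tcoef fct_sumE.
move=> ->; rewrite tcoef_flatten [tnorm _]/tnorm !big_map.
set q := (y^-1%g, tr y f2^-1%g).
have ft := IndS_fin tr1 trM Sw.
rewrite (eq_bigr (fun b' => if b' == q then phi (Cind tr w q) else 0)); last first.
  move=> [b1 b2] _; rewrite /= tcoef1 tltriv mul1r.
  have -> : ((b1^-1, (tr b1 b2)^-1)%g == (y, f2)) = ((b1, b2) == q).
    rewrite !xpair_eqE eqg_invLR; case: (eqVneq b1 y^-1%g) => [->|] //=.
    rewrite eqg_invLR; apply/eqP/eqP => [<-|->]; by rewrite ?trKV' ?trK'.
  by case: eqP => // ->; rewrite tcoef_ind.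
rewrite sum_if_uniq ?undup_uniq //; case: ifP => // /negbT; rewrite mem_undup => nq.
rewrite -tcoef_ind // tcoef_notin //.
by apply/esym/(lin_phi0 (IndS_sub f a) dp.1).
Qed.

Definition Phi (phi : (G * F -> k^o) -> k^o) : G * F -> k^o :=
  fun p => if p.2 == tr p.1^-1%g f^-1%g then phi (E p.1) else 0.

Lemma Phi_in phi : dual_space Sf phi -> S' (Phi phi).
Proof.
move=> dp; split.
  move=> x f2 ne; rewrite /Phi /=; case: eqP => // e2.
  by case/negP: ne; rewrite e2 trKV'.
move=> g x f2 gs ex; rewrite /Phi /=.
have e2 : f2 = tr x^-1%g f^-1%g by rewrite -ex trK'.
have e3 : tr (g * x)^-1%g f^-1%g = tr x^-1%g f^-1%g.
  by rewrite invMg trM; move/stabV/stabP: gs => ->.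
rewrite e3 -e2 eqxx.
rewrite stab_inv in gs.
by rewrite E_shift // (lin_scale _ (IndS_sub f a) dp.1 (E_in x)).
Qed.

Lemma dual0 : dual_space Sf 0.
Proof. by split => // *; rewrite /= mulr0 addr0. Qed.

Lemma dual_sub : subspace (dual_space Sf).
Proof.
split; first exact: dual0.
move=> c u v [lu zu] [lv zv]; split.
  by move=> c' w w' Sw Sw'; rewrite !fadd lu // lv // mulrDr !mulrA (mulrC c c'); ring.
by move=> w nw; rewrite fadd zu // zv // mulr0 addr0.
Qed.


Lemma Phi_lin : lin_on (dual_space Sf) Phi.
Proof.
move=> c u v du dv; apply/funext => -[p1 p2].
by rewrite fadd /Phi /=; case: ifP => _; rewrite ?fadd // mulr0 addr0.
Qed.

Lemma Phi_inj u v : dual_space Sf u -> dual_space Sf v -> Phi u = Phi v -> u = v.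
Proof.
move=> du dv e; apply: dual_ext => // x.
have := congr1 (fun t => t (x, tr x^-1%g f^-1%g)) e.
by rewrite /Phi /= eqxx.
Qed.

Lemma sum_stab' (y : G) (c : k) :
  \sum_(x : G) (if (x * y^-1)%g \in S then c else 0) = #|S|%:R * c.
Proof.
rewrite -(sum_stab y); apply: eq_bigr => x _.
by rewrite -stabVE invMg invgK.
Qed.

Lemma Phi_surj s : S' s -> exists2 phi, dual_space Sf phi & Phi phi = s.
Proof.
move=> [h1 h2].
pose phi (w : G * F -> k^o) : k^o := if `[< Sf w >] then
   (#|S|%:R)^-1 * \sum_(x : G) s (x, tr x^-1%g f^-1%g) * w (x, tr x^-1%g f) else 0.
exists phi.
  split => [c u v Su Sv|w nw]; last by rewrite /phi; case: (asboolP (Sf w)).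
  have Suv := (IndS_sub f a).2 c u v Su Sv.
  rewrite /phi; case: (asboolP (Sf (c *: u + v))) => // _; case: (asboolP (Sf u)) => // _; case: (asboolP (Sf v)) => // _.
  under eq_bigr => x _ do rewrite fadd mulrDr mulrCA.
  by rewrite big_split /= -mulr_sumr mulrDr mulrCA.
apply/funext => -[y f2]; rewrite /Phi /=.
case: eqP => [e2|ne]; last first.
  by rewrite h1 //; apply/eqP => ey; apply: ne; rewrite -ey trK'.
rewrite /phi; case: (asboolP (Sf (E y))) => [_|nE]; last by case: nE; apply: E_in.
rewrite (eq_bigr (fun x => if (x * y^-1)%g \in S then s (y, f2) else 0)).
  by rewrite sum_stab' mulKf ?cardS_neq0.
move=> x _; rewrite /E /=.
case xs: ((x * y^-1)%g \in S); last by rewrite andbF mulr0.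
have exy : x^-1%g = (y^-1 * (x * y^-1)^-1)%g by rewrite invMg invgK mulKg.
have ef : tr x^-1%g f = tr y^-1%g f.
  by rewrite exy trM; move/stabV/stabP: (xs) => ->.
have ef' : tr x^-1%g f^-1%g = tr y^-1%g f^-1%g.
  by rewrite exy trM; move: (xs); rewrite -stab_inv => /stabV/stabP ->.
rewrite ef eqxx /= ef'.
have xs' : (x * y^-1)%g \in stab tr f^-1%g by rewrite stab_inv.
have := h2 _ y (tr y^-1%g f^-1%g) xs' (trKV' _ _); rewrite mulgVK => ->.
by rewrite mulrAC aV // mul1r e2.
Qed.

Lemma Cind_E x y f2 :
  Cind tr (E x) (y^-1%g, tr y f2^-1%g) =
  if f2 == tr (x * y)^-1%g f^-1%g then E (x * y)%g else 0.
Proof.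
have key : (f2 == tr (x * y)^-1%g f^-1%g) = (tr y f2^-1%g == tr x^-1%g f).
  rewrite trV eq_sym eqg_invLR eq_sym.
  rewrite -[LHS](inj_eq (tr_inj tr1 trM (g:=y))) -trM.
  by rewrite invMg mulVKg.
apply/funext => -[p1 p2]; rewrite /Cind /E /= trK' key.
case: (eqVneq (tr y f2^-1%g) (tr x^-1%g f)) => [e|ne]; last first.
  by rewrite /= if_same.
have ef : f2^-1%g = tr (y^-1 * x^-1)%g f by rewrite trM -e trK'.
by rewrite /= invMg mulgA ef; case: (p2 == _).
Qed.

Lemma Phi_compat u b : dual_space Sf u ->
  Cind tr (Phi u) b = Phi (tcoef (rhod u) b).
Proof.
case: b => y f2 du; apply/funext => -[x f3].
have hc : tcoef (rhod u) (y, f2) (E x) =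
    if f2 == tr (x * y)^-1%g f^-1%g then u (E (x * y)%g) else 0.
  rewrite dual_coef //; last exact: E_in.
  rewrite Cind_E; case: ifP => // _.
  exact: (lin_phi0 (IndS_sub f a) du.1).
rewrite /Cind /Phi /= hc.
case: (eqVneq f2 (tr (x * y)^-1%g f^-1%g)) => [e|ne]; last by rewrite !if_same.
have -> : tr y f2 = tr x^-1%g f^-1%g by rewrite e -trM invMg mulVKg.
by [].
Qed.

Lemma part2' : iso' (dual_space Sf) (fun phi b => tcoef (rhod phi) b) S' (Cind tr).
Proof.
exists Phi; split.
- exact: Phi_lin.
- exact: Phi_in.
- exact: Phi_inj.
- exact: Phi_surj.
- by move=> u b du; rewrite Phi_compat.
Qed.


Lemma E1_fix : Cind tr (E 1%g) (1%g, f) = E 1%g.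
Proof.
apply/funext => -[p1 p2]; rewrite /Cind /E /= invg1 !mulg1 !tr1 eqxx /=.
by case: (p2 == f).
Qed.

Lemma E1_shift h : h \in S -> Cind tr (E 1%g) (h, f) = a h *: E 1%g.
Proof.
move=> hs; apply/funext => -[p1 p2]; rewrite fscale /Cind /E /= invg1 !mulg1 tr1.
move/stabP: (hs) => ->; rewrite eqxx /= abel stabML //.
case: (p2 == f); last by rewrite mulr0.
by case ps: (p1 \in S); rewrite ?mulr0 // aM // mulrC.
Qed.

Lemma E1_neq0 : E 1%g != 0.
Proof.
apply/eqP => /(congr1 (fun t => t (1%g, f))); rewrite /E /= invg1 mulg1 tr1 eqxx (stab1 tr1) /= => h.
have : (1 : k) = 0 by rewrite -a1 h.
by move/eqP; rewrite oner_eq0.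
Qed.

Lemma only_if' : iso' Sf (Cind tr) S' (Cind tr) ->
  (exists g, tr g f = f^-1%g) /\ (forall h, h \in S -> a h = a h^-1%g).
Proof.
move=> [psi [l m i s c]].
have sS := IndS_sub f a.
have psi0 : psi 0 = 0 := lin0 l sS.1.
set s0 := psi (E 1%g).
have Ss0 : S' s0 := m _ (E_in 1%g).
have s0ne : exists p, s0 p != 0.
  case: (pselect (exists p, s0 p != 0)) => // hne; exfalso.
  have : psi (E 1%g) = psi 0.
    rewrite psi0; apply/funext => p; apply/eqP.
    by case: (eqVneq (s0 p) 0) => // h; case: hne; exists p.
  by move/i => /(_ (E_in _) sS.1) /eqP; rewrite (negPf E1_neq0).
have fix0 : Cind tr s0 (1%g, f) = s0.
  by rewrite /s0 c; [rewrite E1_fix | apply: E_in].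
have [[p1 p2] hp] := s0ne.
have hp' := hp; rewrite -fix0 /Cind /= tr1 in hp'.
case: (eqVneq p2 f) hp' => [_ hp'|_]; last by rewrite /= eqxx.
rewrite mulg1 in hp'.
split.
  exists p1; apply/eqP; apply: contraNT hp' => ne.
  by apply/eqP; apply: Ss0.1.
move=> h hs.
have e1 : psi (Cind tr (E 1%g) (h, f)) = a h *: s0.
  by rewrite E1_shift // -[a h *: _]addr0 l ?psi0 ?addr0 //; [apply: E_in | exact: sS.1].
have e2 : Cind tr s0 (h, f) = a h^-1%g *: s0.
  apply/funext => -[q1 q2]; rewrite fscale /Cind /= (stabP _ _ hs).
  rewrite -{2}fix0 /Cind /= tr1 mulg1.
  case: (q2 == f); last by rewrite mulr0.
  case: (eqVneq (tr q1 f) f^-1%g) => [eq|ne].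
    rewrite abel; apply: Ss0.2 => //; by rewrite stab_inv.
  rewrite !Ss0.1 ?mulr0 //; rewrite trM (stabP _ _ hs) //.
have := congr1 (fun t => t (p1, f)) (etrans (esym e1) (etrans (esym (c _ _ (E_in _))) e2)).
rewrite !fscale => /mulIf; apply; exact: hp'.
Qed.

Lemma if' g0 : tr g0 f = f^-1%g -> (forall h, h \in S -> a h = a h^-1%g) ->
  iso' Sf (Cind tr) S' (Cind tr).
Proof.
move=> eg0 ha.
have eg0' : tr g0^-1%g f = f^-1%g.
  apply: invg_inj; rewrite -trV invgK -eg0 trK'.
  done.
have eg1 : tr g0 f^-1%g = f by rewrite trV eg0 invgK.
pose Psi (t : G * F -> k^o) : G * F -> k^o := fun p => t ((p.1 * g0)%g, p.2).
pose Psi' (t : G * F -> k^o) : G * F -> k^o := fun p => t ((p.1 * g0^-1)%g, p.2).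
have PsiS t : Sf t -> S' (Psi t).
  move=> [h1 h2]; split.
    move=> x f2 ne; rewrite /Psi /=; apply: h1; rewrite abel trM.
    apply: contra ne => /eqP e; apply/eqP; by rewrite -eg0' -e trK'.
  move=> g x f2 gs ex; rewrite /Psi /= -mulgA h2.
  - by rewrite ha // -stab_inv.
  - by rewrite -stab_inv.
  - by rewrite abel trM ex.
have Psi'S t : S' t -> Sf (Psi' t).
  move=> [h1 h2]; split.
    move=> x f2 ne; rewrite /Psi' /=; apply: h1; rewrite abel trM.
    apply: contra ne => /eqP e; apply/eqP; by rewrite -eg1 -e trKV'.
  move=> g x f2 gs ex; rewrite /Psi' /= -mulgA h2.
  - by rewrite -ha.
  - by rewrite stab_inv.
  - by rewrite abel trM ex.
exists Psi; split.
- by move=> c u v _ _; apply/funext => p.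
- exact: PsiS.
- move=> u v _ _ e; apply/funext => p.
  have := congr1 (fun t => t ((p.1 * g0^-1)%g, p.2)) e.
  by rewrite /Psi /= mulgVK; case: p.
- move=> w Sw; exists (Psi' w); first exact: Psi'S.
  by apply/funext => p; rewrite /Psi /Psi' /= mulgK; case: p.
- move=> u [y f2] _; apply/funext => -[x f3]; rewrite /Psi /Cind /=.
  by rewrite -!mulgA (abel g0 y).
Qed.


Lemma VV_iff : rcomod_iso (fun _ : k^o => True) (rhoV tr f a)
                  (fun _ : k^o => True) (rhoVd tr f a)
  <-> (forall h, h \in S -> a h = a h^-1%g).
Proof.
split.
  move=> [phi [l m i s c]] h hs.
  have phi0 : phi 0 = 0.
    have := l 1 0 0 I I; rewrite scale1r addr0 scale1r => e.
    by apply: (@addrI _ (phi 0)); rewrite -e addr0.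
  have phi1 : phi 1 != 0.
    apply/eqP => e; have : (1 : k^o) = 0 by apply: i => //; rewrite e phi0.
    by move/eqP; rewrite oner_eq0.
  have := c 1 I h; rewrite tcoef_tnorm_map // tcoef_rhoV tcoef_rhoVd stab_inv hs mul1r.
  have -> : phi (a h) = a h * phi 1.
    have := l (a h) 1 0 I I; rewrite !addr0 phi0 addr0.
    have ea : ((a h)%:A : k^o) = a h := mulr1 _.
    by rewrite ea.
  by rewrite mulrC => /(mulfI phi1).
move=> ha; exists (fun x => x); split => //; first by move=> u _; exists u.
move=> u _ g.
rewrite (@tcoef_tnorm_map _ _ _ _ (fun x : k^o => x)) // tcoef_rhoV tcoef_rhoVd stab_inv.
by case gs: (g \in S); rewrite // ha.
Qed.

Lemma final_part2 : rcomod_iso (dual_space Sf) rhod S' (@ind_coact k F G tr k^o).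
Proof.
apply/rcomod_iso_iso'; first exact: dual0.
apply: iso'_ext part2' => // u b Su.
by rewrite tcoef_ind //; apply: (IndS_fin tr1 trM Su).
Qed.

Lemma final_part3 :
  rcomod_iso Sf (@ind_coact k F G tr k^o) (dual_space Sf) rhod <->
  rcomod_iso (fun _ : k^o => True) (rhoV tr f a) (fun _ : k^o => True) (rhoVd tr f a)
  /\ exists g : G, tr g f = f^-1%g.
Proof.
have sS := IndS_sub f a.
have sS' := IndS_sub f^-1%g (fun g => a g^-1%g).
have eind : forall u b, Sf u -> tcoef (ind_coact tr u) b = Cind tr u b.
  by move=> u b Su; rewrite tcoef_ind //; apply: (IndS_fin tr1 trM Su).
rewrite rcomod_iso_iso'; last exact: sS.1.
split.
  move=> h.
  have h1 : iso' Sf (Cind tr) (dual_space Sf) (fun phi b => tcoef (rhod phi) b).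
    by apply: iso'_ext h => // u b Su; rewrite eind.
  have [[g eg] ha] := only_if' (iso'_comp h1 part2').
  by split; [apply/VV_iff | exists g].
move=> [/VV_iff ha [g eg]].
have h2 := iso'_sym dual_sub sS' (fun phi b dp => (hd dp).1 b)
            (fun u b Su => Cind_in b Su) part2'.
have h3 := iso'_comp (if' eg ha) h2.
by apply: iso'_ext h3 => // u b Su; rewrite eind.
Qed.

End Main.

Section RC.
Variables (k : fieldType) (F : groupType) (G : finGroupType) (tr : G -> F -> F)
  (f : F) (a : G -> k).
Hypothesis tr1 : forall f, tr 1%g f = f.
Hypothesis trM : forall g g' f, tr (g * g')%g f = tr g (tr g' f).
Hypothesis abel : forall x y : G, (x * y = y * x)%g.

Lemma rcomod_char :
  is_rcomod (deltaK k tr f) (@epsK k G) (fun _ : k^o => True) (rhoV tr f a) ->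
  a 1%g = 1 /\
  (forall g h, g \in stab tr f -> h \in stab tr f -> a (g * h)%g = a g * a h).
Proof.
have hV : forall c g, tcoef (rhoV tr f a c) g = if g \in stab tr f then c * a g else 0.
  move=> c g; rewrite /rhoV tcoef_map /=.
  by rewrite (@sum_pred1_uniq _ _ _ _ (fun h => (c * a h : k^o))) ?enum_uniq // mem_enum.
move=> [_ _ _ coas cou]; split.
  have := cou 1 I; rewrite /rhoV big_map /epsK /=.
  rewrite (eq_bigr (fun g => if g == 1%g then (1 * a g : k^o) else 0)); last first.
    by move=> g _; case: eqP => _; rewrite ?scale1r ?scale0r.
  rewrite -big_mkcond sum_pred1_uniq ?enum_uniq // mem_enum (stab1 tr1) mul1r.
  by [].
move=> g h gs hs.
have := coas 1 I (h, g).
rewrite tcoef_rho_id; last by move=> g'; rewrite hV mul0r if_same.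
rewrite hV hV gs hs mul1r tcoef_id_delta /rhoV big_map /=.
rewrite (eq_bigr (fun g' => if g' == (h * g)%g then (1 * a g' : k^o) else 0)); last first.
  move=> g' _; rewrite /deltaK big_map /=.
  rewrite (eq_bigl (fun x => (x == g) && (g' * g^-1 == h)%g)); last first.
    move=> x; rewrite xpair_eqE; case: (eqVneq x g) => [->|nx]; by rewrite ?andbT ?andbF.
  rewrite big_mkcondr sum_pred1_uniq ?enum_uniq // mem_enum gs divg_eq.
  by case: ifP => _; rewrite ?scale1r.
rewrite -big_mkcond sum_pred1_uniq ?enum_uniq // mem_enum.
have -> : (h * g)%g \in stab tr f.
  by move: gs hs; rewrite !inE trM => /eqP -> /eqP ->.
by rewrite mul1r abel => ->.
Qed.

End RC.

Theorem proposition6p2 (k : closedFieldType) (F : groupType) (G : finGroupType)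
  (tr : G -> F -> F) (tl : G -> F -> G) (f : F) (a : G -> k)
  (rhod : (((G * F) -> k^o) -> k^o) ->
          seq ((((G * F) -> k^o) -> k^o) * (G * F))) :
  [pchar k] =i pred0 ->
  abelian [set: G] ->
  matched_pair tr tl ->
  (forall g h, tl g h = g) ->
  (* V = k v is a (simple) right k^(G_f)-comodule *)
  is_rcomod (deltaK k tr f) (@epsK k G) (fun _ : k^o => True) (rhoV tr f a) ->
  (* rhod is the coaction of the dual H-comodule of V~ = (V (x) kf) []_(H'_f) H *)
  is_dual_coact (antipH k tr tl) (cotensor_space tr (rhoV tr f a) f)
                (@ind_coact k F G tr k^o) rhod ->
  [/\ stab tr (f^-1)%g = stab tr f,
      rcomod_iso (dual_space (cotensor_space tr (rhoV tr f a) f)) rhod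
                 (cotensor_space tr (rhoVd tr f a) (f^-1)%g) (@ind_coact k F G tr k^o) &
      (rcomod_iso (cotensor_space tr (rhoV tr f a) f) (@ind_coact k F G tr k^o)
                  (dual_space (cotensor_space tr (rhoV tr f a) f)) rhod
       <->
       rcomod_iso (fun _ : k^o => True) (rhoV tr f a)
                  (fun _ : k^o => True) (rhoVd tr f a)
       /\ exists g : G, tr g f = (f^-1)%g)].
Proof.
move=> ch0 abG [[tr1 trM _ _] [trc _]] tltriv rc hd.
have trmul : forall g (f1 f2 : F), tr g (f1 * f2)%g = (tr g f1 * tr g f2)%g.
  by move=> g f1 f2; rewrite trc tltriv.
have abel : forall x y : G, (x * y = y * x)%g.
  move=> x y; move/centsP: abG => h.
  exact: (h x (finset.in_setT x) y (finset.in_setT y)).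
have [a1 aM] := rcomod_char tr1 trM abel rc.
have cS : cotensor_space tr (rhoV tr f a) f = IndS tr f a.
  apply/funext => t; apply/propext; apply: (cotensor_IndS tr1 trM) => //.
  by move=> c g; rewrite tcoef_rhoV.
have cS' : cotensor_space tr (rhoVd tr f a) f^-1%g = IndS tr f^-1%g (fun g => a g^-1%g).
  apply/funext => t; apply/propext; apply: (cotensor_IndS tr1 trM) => /=.
    by move=> c g; rewrite tcoef_rhoVd.
  by rewrite invg1.
rewrite cS in hd; rewrite cS cS'; split.
- by rewrite stab_inv.
- by apply: final_part2.
- by apply: final_part3.
Qed.
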